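(* Let $C\ge 1$. If there exists a $C$-competitive online algorithm for $\textsc{Strip-Packing}$, then for every $n$ there exists a $4C$-competitive online algorithm for $\textsc{Online-Sorting}[2C,n]$.
   Context: $\textsc{Strip-Packing}$: pieces are convex polygons arriving one at a time; each must be placed irrevocably, by translation only, inside the strip $[0,\infty)\times[0,1]$, interior-disjoint from previously placed pieces, before the next piece is revealed. The cost is the largest $x$-coordinate of a point of a placed piece. An algorithm $\mathcal A$ is $C$-competitive if $\mathcal A(I)\le C\cdot\mathrm{OPT}(I)$ for every instance $I$, where $\mathrm{OPT}(I)$ is the offline optimal cost. $\textsc{Online-Sorting}[\gamma,n]$: an array of $\gamma n$ initially empty cells; a stream of $n$ reals in $[0,1]$ arrives one at a time and each must be placed irrevocably into an empty cell before the next is revealed. With $r_1,\dots,r_n$ the reals in left-to-right order in the array, $r_0:=0$, $r_{n+1}:=1$, the cost is $\sum_{i=0}^n|r_{i+1}-r_i|$; the offline optimum is $1$, and an algorithm is $\Delta$-competitive if its cost is at most $\Delta$ on every stream. *)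

(* Defs.v *)
From Stdlib Require Import Reals Lra List.
Import ListNotations.
Open Scope R_scope.

Definition Point := (R * R)%type.

(* A piece is given by a finite list of points; the piece itself is their
   convex hull. *)
Definition Piece := list Point.

Fixpoint sumR (l : list R) : R :=
  match l with nil => 0 | x :: l' => x + sumR l' end.

Definition in_hull (vs : list Point) (p : Point) : Prop :=
  exists ws : list R,
    length ws = length vs /\
    Forall (fun w => 0 <= w) ws /\
    sumR ws = 1 /\
    fst p = sumR (map (fun wv => fst wv * fst (snd wv)) (combine ws vs)) /\
    snd p = sumR (map (fun wv => fst wv * snd (snd wv)) (combine ws vs)).

(* A genuine convex polygon: its hull has nonempty interior, i.e. three
   of its vertices are not collinear. *)
Definition is_polygon (P : Piece) : Prop :=
  exists a b c, In a P /\ In b P /\ In c P /\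
    (fst b - fst a) * (snd c - snd a) - (snd b - snd a) * (fst c - fst a) <> 0.

Definition translate (t : Point) (P : Piece) : Piece :=
  map (fun v => (fst v + fst t, snd v + snd t)) P.

Definition region (P : Piece) (t : Point) : Point -> Prop :=
  in_hull (translate t P).

Definition interior (S : Point -> Prop) (p : Point) : Prop :=
  exists e, 0 < e /\
    forall q, (fst q - fst p)^2 + (snd q - snd p)^2 < e^2 -> S q.

Definition interior_disjoint (S T : Point -> Prop) : Prop :=
  forall p, ~ (interior S p /\ interior T p).

Definition in_strip (S : Point -> Prop) : Prop :=
  forall p, S p -> 0 <= fst p /\ 0 <= snd p <= 1.

Definition valid_piece (P : Piece) : Prop :=
  is_polygon P /\ exists t, in_strip (region P t).

Definition feasible_packing (I : list Piece) (ts : list Point) : Prop :=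
  length ts = length I /\
  forall i, (i < length I)%nat ->
    in_strip (region (nth i I nil) (nth i ts (0,0))) /\
    forall j, (j < i)%nat ->
      interior_disjoint (region (nth j I nil) (nth j ts (0,0)))
                        (region (nth i I nil) (nth i ts (0,0))).

(* largest x-coordinate of a point of P translated by t
   (the maximum over the hull is attained at a vertex) *)
Definition piece_right (P : Piece) (t : Point) : R :=
  fold_right Rmax 0 (map (fun v => fst v + fst t) P).

Definition packing_cost (I : list Piece) (ts : list Point) : R :=
  fold_right Rmax 0 (map (fun Pt => piece_right (fst Pt) (snd Pt)) (combine I ts)).

(* A deterministic online algorithm chooses the translation of the current
   piece from the pieces revealed so far and the current piece. *)
Definition SPAlg := list Piece -> Piece -> Point.

Definition online_placements (A : SPAlg) (I : list Piece) : list Point :=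
  map (fun k => A (firstn k I) (nth k I nil)) (seq 0 (length I)).

Definition SP_competitive (A : SPAlg) (C : R) : Prop :=
  forall I : list Piece, Forall valid_piece I ->
    feasible_packing I (online_placements A I) /\
    forall ts, feasible_packing I ts ->
      packing_cost I (online_placements A I) <= C * packing_cost I ts.

Definition num_cells (gamma : R) (n : nat) : nat :=
  Z.to_nat (Int_part (gamma * INR n)).

(* A deterministic online algorithm picks the cell of the current real from
   the reals revealed so far and the current real. *)
Definition SortAlg := list R -> R -> nat.

Definition sort_cells (B : SortAlg) (xs : list R) : list nat :=
  map (fun k => B (firstn k xs) (nth k xs 0)) (seq 0 (length xs)).

Definition valid_stream (n : nat) (xs : list R) : Prop :=
  length xs = n /\ Forall (fun x => 0 <= x <= 1) xs.

Definition valid_sorting (gamma : R) (n : nat) (B : SortAlg) : Prop :=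
  forall xs, valid_stream n xs ->
    Forall (fun c => (c < num_cells gamma n)%nat) (sort_cells B xs) /\
    NoDup (sort_cells B xs).

(* the reals in left-to-right order of the array with m cells *)
Definition array_contents (m : nat) (cs : list nat) (xs : list R) : list R :=
  concat (map (fun c => map snd (filter (fun p => Nat.eqb (fst p) c) (combine cs xs)))
              (seq 0 m)).

(* sum_{i=0}^{n} |r_{i+1} - r_i| with r_0 = prev (=0), r_{n+1} = 1 *)
Fixpoint tv (prev : R) (l : list R) : R :=
  match l with
  | nil => Rabs (1 - prev)
  | x :: l' => Rabs (x - prev) + tv x l'
  end.

Definition sorting_cost (gamma : R) (n : nat) (B : SortAlg) (xs : list R) : R :=
  tv 0 (array_contents (num_cells gamma n) (sort_cells B xs) xs).

Definition OS_competitive (gamma : R) (n : nat) (B : SortAlg) (Delta : R) : Prop :=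
  valid_sorting gamma n B /\
  forall xs, valid_stream n xs -> sorting_cost gamma n B xs <= Delta.

(* Main.v *)
Require Import Defs.
From Stdlib Require Import Reals.
Open Scope R_scope.
From Stdlib Require Import Lra Lia List Sorted ZArith.
Import ListNotations.
Open Scope R_scope.

Definition pc (d x : R) : Piece := [(0,0);(d,0);(d+x,1);(x,1)].

Lemma region_char d x t p : 0 < d ->
  (region (pc d x) t p <->
   (0 <= snd p - snd t <= 1 /\ 0 <= fst p - fst t - x*(snd p - snd t) <= d)).
Proof.
  intros Hd. destruct t as [a b]; destruct p as [u v]; simpl.
  unfold region, in_hull, translate, pc; simpl. split.
  - intros [ws [Hl [Hf [Hs [H1 H2]]]]].
    destruct ws as [|w0 [|w1 [|w2 [|w3 [|]]]]]; simpl in Hl; try discriminate.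
    inversion Hf as [|? ? F0 Hf1]; inversion Hf1 as [|? ? F1 Hf2];
    inversion Hf2 as [|? ? F2 Hf3]; inversion Hf3 as [|? ? F3 _].
    simpl in Hs, H1, H2.
    assert (E: u - a - x*(v-b) = (w1+w2)*d) by (rewrite H1, H2; nra).
    rewrite E. rewrite H2.
    assert (Ev: w0 * (0 + b) + (w1 * (0 + b) + (w2 * (1 + b) + (w3 * (1 + b) + 0))) - b = w2 + w3).
    { transitivity (w2+w3 + b*((w0+(w1+(w2+(w3+0)))) - 1)); [ring| rewrite Hs; ring]. }
    rewrite Ev. split; [lra|split].
    apply Rmult_le_pos; lra.
    assert (0 <= (1 - (w1+w2)) * d) by (apply Rmult_le_pos; lra). lra.
  - intros [[Hq1 Hq2] [Hs1 Hs2]].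
    pose (s := (u - a - x*(v-b))/d).
    assert (Hsd : s * d = u - a - x*(v-b)) by (unfold s; field; lra).
    assert (Hs0 : 0 <= s <= 1).
    { split.
      - apply (Rmult_le_reg_r d); lra.
      - apply (Rmult_le_reg_r d); lra. }
    clearbody s.
    exists [(1-(v-b))*(1-s); (1-(v-b))*s; (v-b)*s; (v-b)*(1-s)]. simpl.
    split; [reflexivity|]. split.
    { repeat (constructor; [nra|]); constructor. }
    split; [ring|]. split.
    + nra.
    + ring.
Qed.

Lemma sq_bound u e : 0 < e -> u^2 < e^2 -> -e < u < e.
Proof. intros He H. split; nra. Qed.

Lemma min4 a b c e : 0 < a -> 0 < b -> 0 < c -> 0 < e ->
  exists m, 0 < m /\ m <= a /\ m <= b /\ m <= c /\ m <= e.
Proof.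
  intros. exists (Rmin (Rmin a b) (Rmin c e)).
  pose proof (Rmin_l (Rmin a b) (Rmin c e)). pose proof (Rmin_r (Rmin a b) (Rmin c e)).
  pose proof (Rmin_l a b). pose proof (Rmin_r a b). pose proof (Rmin_l c e). pose proof (Rmin_r c e).
  repeat split; try lra.
  apply Rmin_glb_lt; apply Rmin_glb_lt; lra.
Qed.

Lemma interior_strict d x t p : 0 < d -> 0 <= x <= 1 ->
  0 < snd p - snd t < 1 -> 0 < fst p - fst t - x*(snd p - snd t) < d ->
  Defs.interior (region (pc d x) t) p.
Proof.
  intros Hd Hx Hq Hs.
  destruct (min4 (snd p - snd t) (1 - (snd p - snd t)) (fst p - fst t - x*(snd p - snd t))
      (d - (fst p - fst t - x*(snd p - snd t)))) as [m [Hm0 [Hm1 [Hm2 [Hm3 Hm4]]]]]; try lra.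
  exists (m/2). split; [lra|].
  intros r Hr. apply region_char; [lra|].
  pose proof (pow2_ge_0 (snd r - snd p)). pose proof (pow2_ge_0 (fst r - fst p)).
  assert (H1 : (fst r - fst p)^2 < (m/2)^2) by lra.
  assert (H2 : (snd r - snd p)^2 < (m/2)^2) by lra.
  apply sq_bound in H1; [|lra]. apply sq_bound in H2; [|lra].
  assert (H3 : - (m/2) <= x * (snd r - snd p) <= m/2) by (split; nra).
  assert (E : x*(snd r - snd t) = x*(snd r - snd p) + x*(snd p - snd t)) by ring.
  rewrite E. split; split; lra.
Qed.

Lemma disj_sym S T : interior_disjoint S T -> interior_disjoint T S.
Proof. intros H p [H1 H2]. apply (H p); auto. Qed.

Lemma opt_disjoint d x1 x2 t1 t2 : 0 < d -> snd t1 = 0 -> snd t2 = 0 ->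
  fst t1 + d <= fst t2 -> x1 <= x2 ->
  interior_disjoint (region (pc d x1) t1) (region (pc d x2) t2).
Proof.
  intros Hd Hb1 Hb2 Ha Hx p [[e1 [He1 H1]] [e2 [He2 H2]]].
  assert (P2 : region (pc d x2) t2 p).
  { apply H2. replace (fst p - fst p) with 0 by ring. replace (snd p - snd p) with 0 by ring. nra. }
  assert (P1 : region (pc d x1) t1 (fst p + e1/2, snd p)).
  { apply H1. simpl. replace (snd p - snd p) with 0 by ring.
    replace (fst p + e1/2 - fst p) with (e1/2) by ring. nra. }
  apply region_char in P2; [|lra]. apply region_char in P1; [|lra]. simpl in P1.
  rewrite Hb1 in P1. rewrite Hb2 in P2.
  destruct P2 as [[Q1 Q2] [S1 S2]]. destruct P1 as [_ [_ T2]].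
  assert (x1 * (snd p - 0) <= x2 * (snd p - 0)) by nra.
  lra.
Qed.

Lemma overlap d x1 x2 t1 t2 q : 0 < d -> 0 <= x1 <= 1 -> 0 <= x2 <= 1 ->
  snd t1 = 0 -> snd t2 = 0 -> 0 < q < 1 ->
  - d < (fst t2 + x2 * q) - (fst t1 + x1 * q) < d ->
  ~ interior_disjoint (region (pc d x1) t1) (region (pc d x2) t2).
Proof.
  intros Hd Hx1 Hx2 Hb1 Hb2 Hq Hg H.
  apply (H (((fst t1 + x1*q) + (fst t2 + x2*q) + d)/2, q)).
  split; apply interior_strict; simpl; try rewrite Hb1; try rewrite Hb2; lra.
Qed.

Lemma find_q d g0 b : 0 < d -> 0 <= g0 -> ~ (d <= g0 /\ d <= g0 + b) ->
  exists q, 0 < q < 1 /\ - d < g0 + b * q < d.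
Proof.
  intros Hd Hg H.
  destruct (Rlt_or_le g0 d) as [H1|H1].
  - destruct (Rle_or_lt 0 b) as [Hb|Hb].
    + exists ((d - g0)/(2*(b + d - g0))).
      assert (Hq : (d - g0)/(2*(b + d - g0)) * (2*(b + d - g0)) = d - g0) by (field; lra).
      set (q := (d - g0)/(2*(b + d - g0))) in *. clearbody q.
      assert (0 < q) by nra. split; [split|split]; nra.
    + exists (d/(2*(d - b))).
      assert (Hq : d/(2*(d - b)) * (2*(d - b)) = d) by (field; lra).
      set (q := d/(2*(d - b))) in *. clearbody q.
      assert (0 < q) by nra. split; [split|split]; nra.
  - assert (Hb : g0 + b < d) by lra.
    set (v := (Rmax (g0+b) (-d) + d)/2).
    assert (Hv : g0 + b < v < d /\ -d < v).
    { unfold v. destruct (Rle_or_lt (g0+b) (-d)).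
      - rewrite Rmax_right by lra. lra.
      - rewrite Rmax_left by lra. lra. }
    clearbody v.
    exists ((g0 - v)/(-b)).
    assert (Hq : (g0 - v)/(-b) * (-b) = g0 - v) by (field; lra).
    set (q := (g0 - v)/(-b)) in *. clearbody q.
    assert (0 < q) by nra. split; [split|split]; nra.
Qed.

Lemma online_pair d x1 x2 t1 t2 : 0 < d -> 0 <= x1 <= 1 -> 0 <= x2 <= 1 ->
  snd t1 = 0 -> snd t2 = 0 -> fst t1 <= fst t2 ->
  interior_disjoint (region (pc d x1) t1) (region (pc d x2) t2) ->
  fst t1 + d <= fst t2 /\ fst t1 + x1 + d <= fst t2 + x2.
Proof.
  intros Hd Hx1 Hx2 Hb1 Hb2 Ha H.
  destruct (Rle_dec (fst t1 + d) (fst t2)); destruct (Rle_dec (fst t1 + x1 + d) (fst t2 + x2));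
    try (split; assumption); exfalso;
  (destruct (find_q d (fst t2 - fst t1) (x2 - x1)) as [q [Hq Hg]]; [lra|lra|lra|];
   apply (overlap d x1 x2 t1 t2 q); auto; nra).
Qed.

Lemma fold_Rmax_ge y l : In y l -> y <= fold_right Rmax 0 l.
Proof.
  induction l as [|z l IH]; simpl; [tauto|].
  intros [->|H]; [apply Rmax_l|]. eapply Rle_trans; [apply IH; auto|apply Rmax_r].
Qed.

Lemma fold_Rmax_le M l : 0 <= M -> (forall y, In y l -> y <= M) -> fold_right Rmax 0 l <= M.
Proof.
  intros HM; induction l as [|z l IH]; simpl; intros H; [auto|].
  apply Rmax_lub; auto.
Qed.

Lemma nth_map_seq {A} (f : nat -> A) n k d : (k < n)%nat -> nth k (map f (seq 0 n)) d = f k.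
Proof.
  intros Hk. rewrite (nth_indep _ d (f 0%nat)) by (rewrite length_map, length_seq; auto).
  rewrite map_nth, seq_nth; auto.
Qed.

Lemma nth_map' {A B} (f : A -> B) l k d d' : (k < length l)%nat -> nth k (map f l) d = f (nth k l d').
Proof.
  intros Hk. rewrite (nth_indep _ d (f d')) by (rewrite length_map; auto). apply map_nth.
Qed.

Lemma IP_nonneg y : 0 <= y -> (0 <= Int_part y)%Z.
Proof.
  intros Hy. destruct (base_Int_part y) as [H1 H2].
  assert (H : (-1 < Int_part y)%Z) by (apply lt_IZR; simpl; lra). lia.
Qed.

Lemma IP_lt y z : 0 <= y -> y + 1 <= z -> (Z.to_nat (Int_part y) < Z.to_nat (Int_part z))%nat.
Proof.
  intros Hy Hz. destruct (base_Int_part y) as [H1 H2]. destruct (base_Int_part z) as [H3 H4].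
  assert (H : (Int_part y < Int_part z)%Z) by (apply lt_IZR; lra).
  pose proof (IP_nonneg y Hy). lia.
Qed.

Lemma combine_map_seq (c : nat -> nat) (xs : list R) n : length xs = n ->
  combine (map c (seq 0 n)) xs = map (fun k => (c k, nth k xs 0)) (seq 0 n).
Proof.
  intros Hl. apply nth_ext with (d := (0%nat,0)) (d' := (0%nat,0)).
  - rewrite length_combine, !length_map, length_seq. lia.
  - intros k Hk. rewrite length_combine, length_map, length_seq in Hk.
    rewrite combine_nth by (rewrite length_map, length_seq; auto).
    rewrite !nth_map_seq by lia. reflexivity.
Qed.

Lemma filter_map_pair (c : nat -> nat) (X : nat -> R) c0 l :
  filter (fun p => Nat.eqb (fst p) c0) (map (fun k => (c k, X k)) l) =
  map (fun k => (c k, X k)) (filter (fun k => Nat.eqb (c k) c0) l).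
Proof.
  induction l as [|k l IH]; simpl; [auto|]. destruct (Nat.eqb (c k) c0); simpl; rewrite IH; auto.
Qed.

Lemma contents_eq (c : nat -> nat) (xs : list R) n m : length xs = n ->
  array_contents m (map c (seq 0 n)) xs =
  map (fun k => nth k xs 0)
    (concat (map (fun c0 => filter (fun k => Nat.eqb (c k) c0) (seq 0 n)) (seq 0 m))).
Proof.
  intros Hl. unfold array_contents. rewrite combine_map_seq by auto.
  rewrite concat_map, map_map. f_equal. apply map_ext. intros c0.
  rewrite filter_map_pair, map_map. reflexivity.
Qed.

Lemma SS_app {A} (Rl : A -> A -> Prop) l1 l2 : StronglySorted Rl l1 -> StronglySorted Rl l2 ->
  (forall u v, In u l1 -> In v l2 -> Rl u v) -> StronglySorted Rl (l1 ++ l2).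
Proof.
  induction l1 as [|a l1 IH]; simpl; intros H1 H2 H; auto.
  apply StronglySorted_inv in H1 as [H1 F]. constructor.
  - apply IH; auto.
  - apply Forall_app; split; auto. apply Forall_forall; intros; apply H; auto.
Qed.

Lemma SS_filter (c : nat -> nat) c0 l : NoDup l ->
  (forall u v, In u l -> In v l -> c u = c v -> u = v) ->
  StronglySorted (fun u v => (c u < c v)%nat) (filter (fun k => Nat.eqb (c k) c0) l).
Proof.
  induction l as [|a l IH]; simpl; intros Hn Hi; [constructor|].
  inversion Hn; subst.
  assert (IH' : StronglySorted (fun u v => (c u < c v)%nat) (filter (fun k => Nat.eqb (c k) c0) l))
    by (apply IH; auto).
  destruct (Nat.eqb (c a) c0) eqn:E; auto.
  constructor; auto. apply Forall_forall. intros v Hv. apply filter_In in Hv as [Hv Ev].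
  exfalso. apply Nat.eqb_eq in E, Ev. assert (a = v) by (apply Hi; auto; lia). subst; auto.
Qed.

Lemma SS_concat (c : nat -> nat) n m s :
  (forall u v, (u < n)%nat -> (v < n)%nat -> c u = c v -> u = v) ->
  StronglySorted (fun u v => (c u < c v)%nat)
    (concat (map (fun c0 => filter (fun k => Nat.eqb (c k) c0) (seq 0 n)) (seq s m))).
Proof.
  intros Hi. revert s. induction m as [|m IH]; intros s; simpl; [constructor|].
  apply SS_app; auto.
  - apply SS_filter; [apply seq_NoDup|]. intros u v Hu Hv. apply in_seq in Hu, Hv. apply Hi; lia.
  - intros u v Hu Hv. apply filter_In in Hu as [_ Hu]. apply Nat.eqb_eq in Hu.
    apply in_concat in Hv as [l [Hl Hv]]. apply in_map_iff in Hl as [c1 [<- Hc1]].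
    apply filter_In in Hv as [_ Hv]. apply Nat.eqb_eq in Hv. apply in_seq in Hc1. lia.
Qed.

Lemma tv_chain (X a : nat -> R) (Rl : nat -> nat -> Prop) (P : nat -> Prop) d M :
  (forall k l, P k -> P l -> Rl k l -> a k + d <= a l /\ a k + X k + d <= a l + X l) ->
  (forall k, P k -> 0 <= X k <= 1 /\ a k + d + X k <= M) ->
  forall K k0, StronglySorted Rl (k0 :: K) -> Forall P (k0 :: K) ->
  tv (X k0) (map X K) <= 1 - X k0 + 2 * (M - d - a k0 - INR (length K) * d).
Proof.
  intros HR HP. induction K as [|k1 K IH]; intros k0 HS HF; cbn [tv map].
  - destruct (HP k0) as [H1 H2]; [inversion HF; auto|].
    simpl (INR (length [])). rewrite Rabs_right by lra. lra.
  - apply StronglySorted_inv in HS as [HS HF2]. inversion HF2; subst.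
    inversion HF; subst.
    specialize (IH k1 HS H4). destruct (HR k0 k1) as [R1 R2]; auto.
    inversion H4; auto.
    destruct (HP k0) as [P1 P2]; auto.
    destruct (HP k1) as [P3 P4]; [inversion H4; auto|].
    change (length (k1 :: K)) with (S (length K)). rewrite S_INR.
    destruct (Rle_or_lt (X k0) (X k1)).
    + rewrite Rabs_right by lra. lra.
    + rewrite Rabs_left by lra. lra.
Qed.

Lemma filter_len_le {A} (p p' : A -> bool) L :
  (forall j, In j L -> p j = true -> p' j = true) ->
  (length (filter p L) <= length (filter p' L))%nat.
Proof.
  induction L as [|a L IH]; simpl; intros H; auto.
  destruct (p a) eqn:E1; [rewrite (H a) by auto; simpl; apply le_n_S, IH; auto|].
  destruct (p' a); simpl; [apply le_S|]; apply IH; auto.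
Qed.

Lemma filter_len_lt {A} (p p' : A -> bool) L :
  (forall j, In j L -> p j = true -> p' j = true) ->
  (exists j, In j L /\ p' j = true /\ p j = false) ->
  (length (filter p L) < length (filter p' L))%nat.
Proof.
  induction L as [|a L IH]; simpl; intros H [j [Hj [E1 E2]]]; [tauto|].
  destruct Hj as [<-|Hj].
  - rewrite E1, E2. simpl. apply le_n_S, filter_len_le; auto.
  - destruct (p a) eqn:Ea.
    + rewrite (H a) by auto. simpl. apply le_n_S, IH; eauto.
    + destruct (p' a); simpl; [apply le_S|]; apply IH; eauto.
Qed.


Definition lb (X : nat -> R) (k l : nat) : bool :=
  if Rlt_dec (X l) (X k) then true
  else if Req_EM_T (X l) (X k) then Nat.ltb l k else false.

Lemma lb_spec (X : nat -> R) k l : lb X k l = true <-> (X l < X k \/ (X l = X k /\ (l < k)%nat)).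
Proof.
  unfold lb. destruct (Rlt_dec (X l) (X k)); [tauto|].
  destruct (Req_EM_T (X l) (X k)).
  - rewrite Nat.ltb_lt. split; [tauto|]. intros [H|H]; [lra|tauto].
  - split; [discriminate|]. intros [H|H]; [lra|tauto].
Qed.

Definition rank (X : nat -> R) (n : nat) k := length (filter (lb X k) (seq 0 n)).

Lemma rank_lt (X : nat -> R) (n : nat) k : (k < n)%nat -> (rank X n k < n)%nat.
Proof.
  intros Hk. unfold rank.
  replace n with (length (filter (fun _ => true) (seq 0 n))) at 2.
  - apply filter_len_lt; auto. exists k. split; [apply in_seq; lia|]. split; auto.
    destruct (lb X k k) eqn:E; auto. apply lb_spec in E. destruct E as [E|[_ E]]; [lra|lia].
  - assert (forall l : list nat, filter (fun _ => true) l = l) as ->.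
    { induction l as [|a l IH]; simpl; congruence. }
    apply length_seq.
Qed.

Lemma rank_mono (X : nat -> R) (n : nat) k l : (k < n)%nat -> (l < n)%nat -> lb X l k = true -> (rank X n k < rank X n l)%nat.
Proof.
  intros Hk Hl E. unfold rank. apply filter_len_lt.
  - intros j _ Hj. apply lb_spec in Hj. apply lb_spec in E. apply lb_spec.
    destruct Hj as [Hj|[Hj1 Hj2]]; destruct E as [E|[E1 E2]].
    + left; lra.
    + left; lra.
    + left; lra.
    + right; split; [lra|lia].
  - exists k. split; [apply in_seq; lia|]. split; auto.
    destruct (lb X k k) eqn:E'; auto. apply lb_spec in E'. destruct E' as [E'|[_ E']]; [lra|lia].
Qed.

Lemma lb_total (X : nat -> R) k l : k <> l -> lb X l k = true \/ lb X k l = true.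
Proof.
  intros H. rewrite !lb_spec. destruct (Rtotal_order (X k) (X l)) as [E|[E|E]].
  - left; left; auto.
  - destruct (Nat.lt_ge_cases k l); [left; right; auto|right; right; split; [auto|lia]].
  - right; left; auto.
Qed.


Lemma in_combine_nth {A B} (l1 : list A) (l2 : list B) p d1 d2 :
  length l1 = length l2 -> In p (combine l1 l2) ->
  exists k, (k < length l1)%nat /\ p = (nth k l1 d1, nth k l2 d2).
Proof.
  intros Hl Hp. apply (In_nth _ _ (d1,d2)) in Hp as [k [Hk Hn]].
  rewrite length_combine in Hk. exists k. split; [lia|].
  rewrite <- Hn. apply combine_nth; auto.
Qed.

Lemma valid_pc d x : 0 < d -> 0 <= x <= 1 -> valid_piece (pc d x).
Proof.
  intros Hd Hx. split.
  - exists (0,0), (d,0), (x,1). simpl. repeat split; auto 10. lra.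
  - exists (0,0). intros p Hp. apply region_char in Hp; auto. simpl in Hp. destruct Hp as [[? ?] [? ?]].
    assert (0 <= x * (snd p - 0)) by (apply Rmult_le_pos; lra). lra.
Qed.

Lemma piece_right_ge d x t : d + x + fst t <= piece_right (pc d x) t.
Proof. apply fold_Rmax_ge. simpl. auto 10. Qed.

Lemma cost_ge (I : list Piece) (P : list Point) k : length P = length I -> (k < length I)%nat ->
  piece_right (nth k I nil) (nth k P (0,0)) <= packing_cost I P.
Proof.
  intros Hl Hk. apply fold_Rmax_ge. apply in_map_iff.
  exists (nth k I nil, nth k P (0,0)). split; auto.
  rewrite <- combine_nth by auto. apply nth_In. rewrite length_combine. unfold Piece, Point in *. lia.
Qed.

Lemma Rd_facts n : (0 < n)%nat -> 0 < / INR n /\ INR n * / INR n = 1.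
Proof.
  intros Hn. assert (0 < INR n) by (apply lt_0_INR; lia).
  split; [apply Rinv_0_lt_compat; auto| field; lra].
Qed.

Lemma main_facts A C n xs : 1 <= C -> SP_competitive A C -> (0 < n)%nat ->
  length xs = n -> Forall (fun x => 0 <= x <= 1) xs ->
  let d := / INR n in
  let T := fun k => A (map (pc d) (firstn k xs)) (pc d (nth k xs 0)) in
  (forall k, (k < n)%nat -> snd (T k) = 0 /\ 0 <= fst (T k) /\ fst (T k) + d + nth k xs 0 <= 2*C) /\
  (forall k l, (k < n)%nat -> (l < n)%nat -> k <> l -> fst (T k) <= fst (T l) ->
     fst (T k) + d <= fst (T l) /\ fst (T k) + nth k xs 0 + d <= fst (T l) + nth l xs 0).
Proof.
  intros HC HA Hn Hl Hx d T.
  destruct (Rd_facts n Hn) as [Hd Hnd]. fold d in Hd, Hnd.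
  set (X := fun k => nth k xs 0).
  assert (HX : forall k, (k < n)%nat -> 0 <= X k <= 1).
  { intros k Hk. unfold X. rewrite Forall_nth in Hx. apply Hx. lia. }
  set (I := map (pc d) xs).
  assert (HlI : length I = n) by (unfold I; rewrite length_map; auto).
  assert (HI : Forall valid_piece I).
  { unfold I. apply Forall_map. eapply Forall_impl; [|exact Hx]. intros x Hx'. apply valid_pc; auto. }
  assert (nthI : forall k, (k < n)%nat -> nth k I nil = pc d (X k)).
  { intros k Hk. unfold I. apply nth_map'. lia. }
  assert (nthP : forall k, (k < n)%nat -> nth k (online_placements A I) (0,0) = T k).
  { intros k Hk. unfold online_placements. rewrite HlI, nth_map_seq by auto.
    unfold T. unfold I at 1. rewrite firstn_map, nthI by auto. reflexivity. }
  destruct (HA I HI) as [[HlP Hfeas] Hcomp].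
  set (rk := rank X n).
  set (ts := map (fun k => (INR (rk k) * d, 0)) (seq 0 n)).
  assert (Hts : forall k, (k < n)%nat -> nth k ts (0,0) = (INR (rk k) * d, 0)).
  { intros k Hk. unfold ts. exact (nth_map_seq (fun k => (INR (rk k) * d, 0)) n k (0,0) Hk). }
  assert (Hrk : forall k, (k < n)%nat -> INR (rk k) * d + d <= 1).
  { intros k Hk. pose proof (rank_lt X n k Hk). fold rk in H.
    assert (INR (rk k) + 1 <= INR n) by (rewrite <- S_INR; apply le_INR; lia).
    assert (INR (rk k) * d + d = (INR (rk k) + 1) * d) by ring.
    assert ((INR (rk k) + 1) * d <= INR n * d) by (apply Rmult_le_compat_r; lra). lra. }
  assert (Hrk0 : forall k, 0 <= INR (rk k) * d) by (intros; apply Rmult_le_pos; [apply pos_INR|lra]).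
  assert (Hfts : feasible_packing I ts).
  { split; [unfold ts; rewrite length_map, length_seq; auto|].
    rewrite HlI. intros i Hi. rewrite nthI, Hts by auto. split.
    - intros p Hp. apply region_char in Hp; auto. simpl in Hp.
      destruct Hp as [[? ?] [? ?]]. pose proof (HX i Hi).
      assert (0 <= X i * (snd p - 0)) by (apply Rmult_le_pos; lra). specialize (Hrk0 i). lra.
    - intros j Hj. rewrite nthI, Hts by lia.
      destruct (lb_total X j i) as [E|E]; [lia| |].
      + pose proof (rank_mono X n j i ltac:(lia) Hi E). fold rk in H.
        apply lb_spec in E.
        apply opt_disjoint; simpl; auto.
        * assert (INR (rk j) + 1 <= INR (rk i)) by (rewrite <- S_INR; apply le_INR; lia).
          assert (INR (rk j) * d + d = (INR (rk j) + 1) * d) by ring.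
          assert ((INR (rk j) + 1) * d <= INR (rk i) * d) by (apply Rmult_le_compat_r; lra). lra.
        * destruct E as [E|[E _]]; lra.
      + pose proof (rank_mono X n i j Hi ltac:(lia) E). fold rk in H.
        apply lb_spec in E. apply disj_sym.
        apply opt_disjoint; simpl; auto.
        * assert (INR (rk i) + 1 <= INR (rk j)) by (rewrite <- S_INR; apply le_INR; lia).
          assert (INR (rk i) * d + d = (INR (rk i) + 1) * d) by ring.
          assert ((INR (rk i) + 1) * d <= INR (rk j) * d) by (apply Rmult_le_compat_r; lra). lra.
        * destruct E as [E|[E _]]; lra. }
  assert (Hcts : packing_cost I ts <= 2).
  { apply fold_Rmax_le; [lra|]. intros y Hy. apply in_map_iff in Hy as [Pt [<- HPt]].
    apply (in_combine_nth _ _ _ nil (0,0)) in HPt.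
    2:{ unfold ts; rewrite length_map, length_seq; auto. }
    destruct HPt as [k [Hk0 ->]]. assert (Hk : (k < n)%nat) by (unfold Piece, Point in *; lia). simpl. rewrite nthI, Hts by auto.
    apply fold_Rmax_le; [lra|]. intros z Hz. simpl in Hz. pose proof (HX k Hk).
    specialize (Hrk k Hk). specialize (Hrk0 k).
    repeat destruct Hz as [<-|Hz]; simpl; try lra. }
  specialize (Hcomp ts Hfts).
  assert (Hcost : packing_cost I (online_placements A I) <= 2 * C) by nra.
  rewrite HlI in Hfeas.
  split.
  - intros k Hk. destruct (Hfeas k Hk) as [Hs _]. rewrite nthI, nthP in Hs by auto.
    assert (R1 : region (pc d (X k)) (T k) (fst (T k), snd (T k))).
    { apply region_char; auto. simpl. split; lra. }
    assert (R2 : region (pc d (X k)) (T k) (fst (T k) + X k, snd (T k) + 1)).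
    { apply region_char; auto. simpl. split; lra. }
    apply Hs in R1. apply Hs in R2. simpl in R1, R2.
    split; [lra|split; [lra|]].
    pose proof (cost_ge I (online_placements A I) k HlP ltac:(rewrite HlI; exact Hk)).
    rewrite nthI, nthP in H by auto. pose proof (piece_right_ge d (X k) (T k)).
    change (nth k xs 0) with (X k). lra.
  - intros k l Hk Hl' Hkl Hle.
    assert (Sk : snd (T k) = 0).
    { destruct (Hfeas k Hk) as [Hs _]. rewrite nthI, nthP in Hs by auto.
      assert (R1 : region (pc d (X k)) (T k) (fst (T k), snd (T k))).
      { apply region_char; auto. simpl. split; lra. }
      assert (R2 : region (pc d (X k)) (T k) (fst (T k) + X k, snd (T k) + 1)).
      { apply region_char; auto. simpl. split; lra. }
      apply Hs in R1. apply Hs in R2. simpl in R1, R2. lra. }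
    assert (Sl : snd (T l) = 0).
    { destruct (Hfeas l Hl') as [Hs _]. rewrite nthI, nthP in Hs by auto.
      assert (R1 : region (pc d (X l)) (T l) (fst (T l), snd (T l))).
      { apply region_char; auto. simpl. split; lra. }
      assert (R2 : region (pc d (X l)) (T l) (fst (T l) + X l, snd (T l) + 1)).
      { apply region_char; auto. simpl. split; lra. }
      apply Hs in R1. apply Hs in R2. simpl in R1, R2. lra. }
    change (nth k xs 0) with (X k); change (nth l xs 0) with (X l).
    apply online_pair; [exact Hd | apply HX; auto | apply HX; auto | auto | auto | auto | ].
    destruct (Nat.lt_gt_cases k l) as [[H|H] _]; [auto| |].
    + destruct (Hfeas l Hl') as [_ Hd']. specialize (Hd' k H).
      rewrite !nthI, !nthP in Hd' by lia. exact Hd'.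
    + destruct (Hfeas k Hk) as [_ Hd']. specialize (Hd' l H).
      rewrite !nthI, !nthP in Hd' by lia. apply disj_sym. exact Hd'.
Qed.

Lemma concat_nils {A B} (l : list A) : concat (map (fun _ : A => @nil B) l) = [].
Proof. induction l; simpl; auto. Qed.

Theorem lemma7 (C : R) (HC : 1 <= C) :
  (exists A : SPAlg, SP_competitive A C) ->
  forall n : nat, exists B : SortAlg, OS_competitive (2 * C) n B (4 * C).
Proof.
  intros [A HA] n.
  destruct (Nat.eq_dec n 0) as [->|Hn0].
  { exists (fun _ _ => 0%nat). split.
    - intros xs [Hl _]. destruct xs; [|discriminate]. split; constructor.
    - intros xs [Hl _]. destruct xs; [|discriminate].
      unfold sorting_cost, array_contents. simpl. rewrite concat_nils. simpl.
      rewrite Rabs_right; lra. }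
  assert (Hn : (0 < n)%nat) by lia.
  destruct (Rd_facts n Hn) as [Hd Hnd].
  set (d := / INR n) in *.
  set (B := fun pre x => Z.to_nat (Int_part (INR n * fst (A (map (pc d) pre) (pc d x))))).
  exists B.
  assert (Main : forall xs, valid_stream n xs ->
    (Forall (fun c => (c < num_cells (2 * C) n)%nat) (sort_cells B xs) /\ NoDup (sort_cells B xs)) /\
    sorting_cost (2 * C) n B xs <= 4 * C).
  { intros xs [Hl Hx].
    pose proof (main_facts A C n xs HC HA Hn Hl Hx) as MF. cbv zeta in MF. fold d in MF.
    destruct MF as [F1 F2].
    set (X := fun k => nth k xs 0) in *.
    set (a := fun k => fst (A (map (pc d) (firstn k xs)) (pc d (X k)))) in *.
    set (c := fun k => Z.to_nat (Int_part (INR n * a k))).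
    assert (F2' : forall k l, (k < n)%nat -> (l < n)%nat -> k <> l -> a k <= a l ->
       a k + d <= a l /\ a k + X k + d <= a l + X l) by exact F2.
    assert (F1' : forall k, (k < n)%nat -> 0 <= a k /\ a k + d + X k <= 2 * C)
      by (intros k Hk; destruct (F1 k Hk) as [_ H]; exact H).
    clear F1 F2. rename F1' into F1. rename F2' into F2.
    assert (HX : forall k, (k < n)%nat -> 0 <= X k <= 1).
    { intros k Hk. unfold X. rewrite Forall_nth in Hx. apply Hx. lia. }
    assert (Hsc : sort_cells B xs = map c (seq 0 n)) by (unfold sort_cells; rewrite Hl; reflexivity).
    assert (Hlt : forall k l, (k < n)%nat -> (l < n)%nat -> a k + d <= a l -> (c k < c l)%nat).
    { intros k l Hk Hl' H. unfold c. destruct (F1 k Hk) as [H0 _].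
      apply IP_lt.
      - apply Rmult_le_pos; [apply pos_INR|exact H0].
      - assert (0 <= INR n * (a l - a k - d)) by (apply Rmult_le_pos; [apply pos_INR|lra]).
        assert (E : INR n * (a l - a k - d) = INR n * a l - INR n * a k - INR n * d) by ring.
        lra. }
    assert (Hinj : forall k l, (k < n)%nat -> (l < n)%nat -> c k = c l -> k = l).
    { intros k l Hk Hl' E. destruct (Nat.eq_dec k l) as [|Hkl]; auto. exfalso.
      destruct (Rle_or_lt (a k) (a l)).
      - destruct (F2 k l Hk Hl' Hkl H) as [H0 _]. pose proof (Hlt k l Hk Hl' H0). lia.
      - destruct (F2 l k Hl' Hk (not_eq_sym Hkl) ltac:(lra)) as [H0 _]. pose proof (Hlt l k Hl' Hk H0). lia. }
    assert (Hbound : forall k, (k < n)%nat -> (c k < num_cells (2 * C) n)%nat).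
    { intros k Hk. unfold c, num_cells. destruct (F1 k Hk) as [H0 H1].
      pose proof (HX k Hk). apply IP_lt.
      - apply Rmult_le_pos; [apply pos_INR|exact H0].
      - assert (0 <= INR n * (2 * C - d - a k)) by (apply Rmult_le_pos; [apply pos_INR|lra]).
        assert (E : INR n * (2 * C - d - a k) = 2 * C * INR n - INR n * d - INR n * a k) by ring.
        lra. }
    assert (Hchain : forall k l, (k < n)%nat -> (l < n)%nat -> (c k < c l)%nat ->
              a k + d <= a l /\ a k + X k + d <= a l + X l).
    { intros k l Hk Hl' H. destruct (Nat.eq_dec k l) as [->|Hkl]; [lia|].
      destruct (Rle_or_lt (a k) (a l)).
      - apply F2; auto.
      - destruct (F2 l k Hl' Hk (not_eq_sym Hkl) ltac:(lra)) as [H5 _]. pose proof (Hlt l k Hl' Hk H5). lia. }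
    split; [split|].
    - rewrite Hsc. apply Forall_map, Forall_forall. intros k Hk. apply in_seq in Hk. apply Hbound. lia.
    - rewrite Hsc. apply NoDup_map_NoDup_ForallPairs; [|apply seq_NoDup].
      intros k l Hk Hl'. apply in_seq in Hk, Hl'. apply Hinj; lia.
    - unfold sorting_cost. rewrite Hsc, contents_eq by auto.
      set (m := num_cells (2 * C) n).
      set (K := concat (map (fun c0 => filter (fun k => Nat.eqb (c k) c0) (seq 0 n)) (seq 0 m))).
      assert (HKin : forall k, In k K -> (k < n)%nat).
      { intros k Hk. apply in_concat in Hk as [l [Hl1 Hl2]]. apply in_map_iff in Hl1 as [c1 [<- _]].
        apply filter_In in Hl2 as [Hl2 _]. apply in_seq in Hl2. lia. }
      assert (HKlen : (n <= length K)%nat).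
      { replace n with (length (seq 0 n)) at 1 by apply length_seq.
        apply NoDup_incl_length; [apply seq_NoDup|]. intros k Hk.
        apply in_concat. exists (filter (fun k' => Nat.eqb (c k') (c k)) (seq 0 n)). split.
        - apply in_map_iff. exists (c k). split; [reflexivity|]. apply in_seq. apply in_seq in Hk. pose proof (Hbound k ltac:(lia)). fold m in H. lia.
        - apply filter_In. split; auto. apply Nat.eqb_refl. }
      assert (HKss : StronglySorted (fun u v => (c u < c v)%nat) K).
      { apply SS_concat. intros; apply Hinj; auto. }
      clearbody K. destruct K as [|k0 K0].
      + simpl in HKlen. lia.
      + change (map (fun k => nth k xs 0) (k0 :: K0)) with (X k0 :: map X K0).
        cbn [tv].
        assert (HF : Forall (fun k => (k < n)%nat) (k0 :: K0)).
        { apply Forall_forall. auto. }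
        pose proof (tv_chain X a (fun u v => (c u < c v)%nat) (fun k => (k < n)%nat) d (2 * C)
                     ltac:(intros; apply Hchain; auto)
                     ltac:(intros k Hk; split; [apply HX; auto| destruct (F1 k Hk) as [_ H2]; exact H2])
                     K0 k0 HKss HF) as HT.
        assert (Hk0 : (k0 < n)%nat) by (apply HKin; left; auto).
        pose proof (HX k0 Hk0). destruct (F1 k0 Hk0) as [Ha0 _].
        simpl in HKlen.
        assert (HL : INR n - 1 <= INR (length K0)).
        { assert (INR n <= INR (S (length K0))) by (apply le_INR; lia). rewrite S_INR in H0. lra. }
        assert (HL2 : (INR n - 1) * d <= INR (length K0) * d) by (apply Rmult_le_compat_r; lra).
        rewrite Rabs_right by lra. lra. }
  split.
  - intros xs Hv. apply Main; auto.
  - intros xs Hv. apply Main; auto.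
Qed.
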